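(* Let $h,k$ be positive integers with $\gcd(h,k)=1$ and $h+k$ odd. Then $$(k-1)B_{1}(h,k)+(h-1)B_{1}(k,h)=-\frac{1}{2}(k-1)(h-1).$$
   Context: $[x]$ denotes the greatest integer $\le x$. For integers $a,b$ with $b>0$ and $\gcd(a,b)=1$, define $$B_{1}(a,b)=\sum_{j=1}^{b-1}(-1)^{j+\left[\frac{aj}{b}\right]}\left[\frac{aj}{b}\right].$$ *)

(* Defs.v *)
From mathcomp Require Import all_boot all_order all_algebra.
Import GRing.Theory Num.Theory.
Local Open Scope ring_scope.

(* Floor of a*j/b for b > 0 is the Euclidean quotient (a*j %/ b)%Z. *)
Definition floor_div (a b : int) (j : nat) : int := ((a * j%:Z) %/ b)%Z.

Definition B1 (a b : int) : int :=
  \sum_(1 <= j < absz b) ((-1) ^ (j%:Z + floor_div a b j)) * floor_div a b j.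

(* Main.v *)
Require Import Defs.
From mathcomp Require Import all_boot all_order all_algebra.
From mathcomp Require Import zify.
Import GRing.Theory Num.Theory.

Definition A (h k j : nat) := (j + h * j %/ k)%N.

Lemma nodiv h k j : coprime h k -> 0 < j < k -> 0 < (h * j) %% k.
Proof.
move=> co /andP[j0 jk]; rewrite lt0n; apply/negP => /eqP H.
have : k %| h * j by rewrite /dvdn H.
rewrite Gauss_dvdr; last by rewrite coprime_sym.
by move/(dvdn_leq j0); rewrite leqNgt jk.
Qed.

Lemma disj h k i j : coprime h k -> 0 < j < k -> 0 < i < h -> A h k j != A k h i.
Proof.
move=> co hj hi; rewrite /A.
have r0 := @nodiv h k j co hj.
have s1 : 0 < (k * i) %% h by apply: nodiv => //; rewrite coprime_sym.
have e1 := divn_eq (h * j) k. have e2 := divn_eq (k * i) h.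
have l1 : (h * j) %% k < k by rewrite ltn_mod; lia.
have l2 : (k * i) %% h < h by rewrite ltn_mod; lia.
move: e1 e2 r0 s1 l1 l2.
set q := h * j %/ k; set r := h * j %% k; set p := k * i %/ h; set s := k * i %% h.
move=> e1 e2 r0 s1 l1 l2.
apply/eqP => E.
case: (ltnP p j) => pj.
  have : q.+1 <= i by lia.
  move=> qi.
  have : h * (p.+1) <= h * j by rewrite leq_mul2l pj orbT.
  have : k * q.+1 <= k * i by rewrite leq_mul2l qi orbT.
  nia.
have : i <= q by lia.
move=> iq.
have : h * j <= h * p by rewrite leq_mul2l pj orbT.
have : k * i <= k * q by rewrite leq_mul2l iq orbT.
nia.
Qed.

Lemma Aub h k j : 0 < h -> j < k -> A h k j < h + k - 1.
Proof.
move=> h0 jk; rewrite /A.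
have : h * j %/ k < h by rewrite ltn_divLR; [rewrite ltn_mul2l; lia | lia].
lia.
Qed.

Lemma Amono h k j j' : j < j' -> A h k j < A h k j'.
Proof.
move=> jj; rewrite /A.
have : h * j %/ k <= h * j' %/ k by apply: leq_div2r; rewrite leq_mul2l ltnW ?orbT.
lia.
Qed.

Lemma Ainj h k : injective (A h k).
Proof.
move=> x y E; case: (ltngtP x y) => // H; have := @Amono h k _ _ H; lia.
Qed.

Lemma permA h k : coprime h k -> 0 < h -> 0 < k ->
  perm_eq (map (A h k) (iota 0 k) ++ map (A k h) (iota 1 (h - 1))) (iota 0 (h + k - 1)).
Proof.
move=> co h0 k0.
have U : uniq (map (A h k) (iota 0 k) ++ map (A k h) (iota 1 (h - 1))).
  rewrite cat_uniq !map_inj_uniq ?iota_uniq ?andbT; try exact: Ainj.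
  apply/hasPn => x /mapP[i]; rewrite mem_iota => hi -> {x}.
  apply/mapP => -[j]; rewrite mem_iota => hj /eqP; apply/negP.
  case: (posnP j) => [->|j0].
    by rewrite /A muln0 div0n addn0 addn_eq0 negb_and -lt0n; case/andP: hi => ->.
  have D := @disj h k i j co. rewrite eq_sym; apply: D; first by rewrite j0; case/andP: hj.
  by rewrite (subnKC h0) in hi.
apply: uniq_perm => //; first exact: iota_uniq.
have Hs : {subset map (A h k) (iota 0 k) ++ map (A k h) (iota 1 (h - 1)) <= iota 0 (h + k - 1)}.
  move=> x; rewrite mem_cat => /orP[] /mapP[j]; rewrite mem_iota => hj ->;
    rewrite mem_iota /= add0n.
    by apply: Aub => //; case/andP: hj.
  by rewrite addnC; apply: Aub => //; rewrite (subnKC h0) in hj; case/andP: hj.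
have Hz : size (iota 0 (h + k - 1)) <= size (map (A h k) (iota 0 k) ++ map (A k h) (iota 1 (h - 1))).
  by rewrite size_cat !size_map !size_iota; lia.
by have [_ E] := uniq_min_size U Hs Hz.
Qed.
Lemma qrev h k j : coprime h k -> (0 < h)%N -> (0 < j < k)%N ->
  (h * (k - j) %/ k + h * j %/ k = h - 1)%N.
Proof.
move=> co h0 hj.
have r0 := @nodiv h k j co hj.
have e1 := divn_eq (h * j) k.
have l1 : (h * j %% k < k)%N by rewrite ltn_mod; lia.
have lq : (h * j %/ k < h)%N by rewrite ltn_divLR; [rewrite ltn_mul2l; lia | lia].
move: e1 r0 l1 lq; set q := h * j %/ k; set r := h * j %% k => e1 r0 l1 lq.
have E : (h * (k - j) = (h - 1 - q) * k + (k - r))%N.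
  rewrite mulnBr !mulnBl e1 mul1n. nia.
rewrite E divnMDl ?divn_small; lia.
Qed.

From mathcomp Require Import ring.
Local Open Scope ring_scope.

Definition e (n : nat) : int := (-1) ^+ n.

Lemma sum_even n : \sum_(m <- iota 0 n.*2) e m = 0.
Proof.
elim: n => [|n IH]; first by rewrite big_nil.
rewrite doubleS -addn2 iotaD big_cat /= IH add0r add0n !big_cons big_nil.
by rewrite /e exprS mulN1r addr0 subrr.
Qed.

Lemma sumA h k : coprime h k -> (0 < h)%N -> (0 < k)%N -> odd (h + k) ->
  1 + \sum_(j <- iota 1 (k - 1)) e (A h k j) + \sum_(i <- iota 1 (h - 1)) e (A k h i) = 0.
Proof.
move=> co h0 k0 od.
have -> : 1 + \sum_(j <- iota 1 (k - 1)) e (A h k j) = \sum_(j <- iota 0 k) e (A h k j).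
  have -> : iota 0 k = 0 :: iota 1 (k - 1) by case: (k) k0 => // k1 _; rewrite subn1.
  by rewrite big_cons /A /e muln0 div0n.
rewrite -!(big_map (A _ _) xpredT e) -big_cat (perm_big _ (@permA h k co h0 k0)).
have -> : (h + k - 1 = (h + k)./2.*2)%N.
  by rewrite -{1}(odd_double_half (h + k)) od add1n subn1.
exact: sum_even.
Qed.


Lemma B1E h k : B1 (Posz h) (Posz k) =
  \sum_(1 <= j < k) e (A h k j) * (h * j %/ k)%N%:Z.
Proof.
rewrite /B1 /=; apply: eq_bigr => j _.
by rewrite /floor_div -PoszM divz_nat -PoszD -exprnP.
Qed.

Lemma B1rev h k : coprime h k -> (0 < h)%N -> odd (h + k) ->
  2 * B1 (Posz h) (Posz k) = (h%:Z - 1) * \sum_(j <- iota 1 (k - 1)) e (A h k j).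
Proof.
move=> co h0 od.
rewrite B1E mulr2n mulrDl mul1r.
rewrite {2}big_nat_rev /= -big_split /= mulr_sumr -[iota 1 (k - 1)]/(index_iota 1 k).
apply: eq_big_nat => j hj.
have hj' : (0 < j < k)%N by lia.
have hq := @qrev h k j co h0 hj'.
have -> : (1 + k - j.+1 = k - j)%N by lia.
have -> : e (A h k (k - j)) = e (A h k j).
  rewrite /e -signr_odd -[in RHS]signr_odd; congr (_ ^+ _).
  have : (A h k (k - j) + A h k j = k + h - 1)%N by rewrite /A; lia.
  move/(congr1 odd); rewrite oddD.
  have -> : odd (k + h - 1) = false.
    have E : (k + h = (k + h - 1).+1)%N by lia.
    by move: od; rewrite addnC E subSS subn0 /=; case: odd.
  by case: odd; case: odd.
rewrite -(mulrDr (e (A h k j))) -PoszD addnC hq subzn //.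
by rewrite mulrC.
Qed.

Theorem theorem14 (h k : int) :
  0 < h -> 0 < k -> gcdz h k = 1%N -> odd (absz (h + k)) ->
  (((k - 1) * B1 h k + (h - 1) * B1 k h)%:~R : rat)
    = - (1 / 2) * ((k - 1) * (h - 1))%:~R.
Proof.
case: h => // h; case: k => // k h0 k0 g od.
have co : coprime h k by rewrite /coprime; apply/eqP; case: g.
have co' : coprime k h by rewrite coprime_sym.
rewrite -PoszD /= in od.
have od' : odd (k + h) by rewrite addnC.
have h0' : (0 < h)%N by [].
have k0' : (0 < k)%N by [].
have S := @sumA h k co h0' k0' od.
have R1 := @B1rev h k co h0' od.
have R2 := @B1rev k h co' k0' od'.
set S1 := \sum_(j <- iota 1 (k - 1)) e (A h k j) in S R1.
set S2 := \sum_(j <- iota 1 (h - 1)) e (A k h j) in S R2.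
have H : 2 * ((k%:Z - 1) * B1 h k + (h%:Z - 1) * B1 k h) = - ((k%:Z - 1) * (h%:Z - 1)).
  have -> : 2 * ((k%:Z - 1) * B1 h k + (h%:Z - 1) * B1 k h)
      = (k%:Z - 1) * (2 * B1 h k) + (h%:Z - 1) * (2 * B1 k h) by ring.
  rewrite R1 R2.
  have -> : S2 = (1 + S1 + S2) - 1 - S1 by ring.
  rewrite S.
  ring.
apply: (@mulfI _ 2) => //.
rewrite -[2 : rat]/((2 : int)%:~R) -intrM H intrN.
by field.
Qed.
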